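(* If $M$ is a finite monoid that is not commutative, then for every stable order $\le$ on $M$, the ordered monoid $(M,\le)$ satisfies $N^1(M)=\Omega(\log n)$.
   Context: A stable order on a monoid $M$ is a partial order with $x\le y\Rightarrow zx\le zy$ and $xz\le yz$ for all $z\in M$. Non-deterministic communication complexity: for $f:X\times Y\to\{0,1\}$, $N^1(f)$ is the minimum cost of a non-deterministic protocol for $f$; equivalently, up to an additive constant 2, $N^1(f)=\log_2 C^1(f)$, where $C^1(f)$ is the minimum number of rectangles $S\times T\subseteq X\times Y$ on which $f\equiv1$ whose union is $f^{-1}(1)$. An order ideal is a subset $I\subseteq M$ with $y\in I, x\le y\Rightarrow x\in I$. For an order ideal $I$, $N^1(M,I)(n)$ is $N^1$ of the function where Alice receives $m_1,m_3,\dots,m_{2n-1}\in M$, Bob receives $m_2,\dots,m_{2n}\in M$, with value $1$ iff $m_1\cdots m_{2n}\in I$; $N^1(M)(n)=\max_I N^1(M,I)(n)$ over all order ideals. Asymptotics are as $n\to\infty$. *)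

(* Defs.v *)
From mathcomp Require Import all_boot.
From Stdlib Require Import Reals.
Set Implicit Arguments. Unset Strict Implicit. Unset Printing Implicit Defensive.

Section Defs.
Variable M : finType.

Definition is_monoid (mul : M -> M -> M) (one : M) : Prop :=
  (forall x y z, mul x (mul y z) = mul (mul x y) z) /\
  (forall x, mul one x = x) /\ (forall x, mul x one = x).

Definition commutative_op (mul : M -> M -> M) : Prop :=
  forall x y, mul x y = mul y x.

Definition stable_order (mul : M -> M -> M) (le : rel M) : Prop :=
  (forall x, le x x) /\
  (forall x y, le x y -> le y x -> x = y) /\
  (forall x y z, le x y -> le y z -> le x z) /\
  (forall x y z, le x y -> le (mul z x) (mul z y) /\ le (mul x z) (mul y z)).

Definition is_ideal (le : rel M) (I : {set M}) : bool :=
  [forall x, forall y, ((y \in I) && le x y) ==> (x \in I)].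

Definition prod_seq (mul : M -> M -> M) (one : M) (s : seq M) : M :=
  foldr mul one s.

(* Interleaving: Alice's a = (m1,m3,...,m_{2n-1}), Bob's b = (m2,...,m_{2n}). *)
Definition interleave (n : nat) (a b : n.-tuple M) : seq M :=
  flatten [seq [:: tnth a i; tnth b i] | i <- enum 'I_n].

Definition word_fun (mul : M -> M -> M) (one : M) (I : {set M}) (n : nat)
  (a b : n.-tuple M) : bool :=
  prod_seq mul one (interleave a b) \in I.
End Defs.

Section Cover.
Variables X Y : finType.

Definition is_cover (f : X -> Y -> bool) (c : seq ({set X} * {set Y})) : bool :=
  all (fun r : {set X} * {set Y} => [forall x in r.1, forall y in r.2, f x y]) c &&
  [forall x, forall y, f x y ==> has (fun r : {set X} * {set Y} => (x \in r.1) && (y \in r.2)) c].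

(* C^1(f): the minimum number of 1-rectangles covering f^{-1}(1).
   The row cover {x} x {y | f x y} has #|X| rectangles, so #|X| is always
   attained and serves as the default of the minimum. *)
Definition C1 (f : X -> Y -> bool) : nat :=
  \big[minn/#|X|]_(k < #|X|.+1 |
      [exists c : k.-tuple ({set X} * {set Y}), is_cover f c]) (k : nat).
End Cover.

Definition C1M (M : finType) (mul : M -> M -> M) (one : M) (le : rel M) (n : nat) : nat :=
  \max_(I : {set M} | is_ideal le I) C1 (@word_fun M mul one I n).

Definition N1M (M : finType) (mul : M -> M -> M) (one : M) (le : rel M) (n : nat) : R :=
  (ln (INR (C1M mul one le n)) / ln 2)%R.

(* Main.v *)
Require Import Defs.
From mathcomp Require Import all_boot.
From Stdlib Require Import Reals Lra.
From mathcomp Require Import zify.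

Section Comb.
Variables (M : finType) (mul : M -> M -> M) (one : M).
Hypothesis hmon : is_monoid mul one.

Lemma foldr_flat (F G : nat -> M) (s : seq nat) :
  foldr mul one (flatten [seq [:: F k; G k] | k <- s]) =
  foldr (fun k acc => mul (F k) (mul (G k) acc)) one s.
Proof. by elim: s => //= k s ->. Qed.

Lemma prod_inter (n : nat) (F G : nat -> M) :
  prod_seq mul one (interleave [tuple F (val t) | t < n] [tuple G (val t) | t < n]) =
  foldr (fun k acc => mul (F k) (mul (G k) acc)) one (iota 0 n).
Proof.
rewrite /prod_seq /interleave -foldr_flat -val_enum_ord -map_comp.
congr (foldr _ _ (flatten _)); apply: eq_map => t /=.
by rewrite !tnth_mktuple.
Qed.

Lemma prod_two (a b : M) (p q m len : nat) :
  foldr (fun k acc => mul (if k == p then a else one)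
          (mul (if k == q then b else one) acc)) one (iota m len) =
  if (m <= p < m + len) && (m <= q < m + len) then
    (if p <= q then mul a b else mul b a)
  else if (m <= p < m + len) then a else if (m <= q < m + len) then b else one.
Proof.
case: hmon => hA [hl hr].
elim: len m => [|len IH] m /=.
  have -> : (m <= p < m + 0) = false by lia.
  have -> : (m <= q < m + 0) = false by lia.
  done.
rewrite IH.
repeat case: ifP => ?; rewrite ?hl ?hr //; try lia.
Qed.
End Comb.

Lemma C1_ge (X Y : finType) (f : X -> Y -> bool) (m : nat)
  (xs : 'I_m -> X) (ys : 'I_m -> Y) :
  (forall i, f (xs i) (ys i)) ->
  (forall i j : 'I_m, i < j -> f (xs i) (ys j) = false) ->
  m <= #|X| -> m <= Defs.C1 f.
Proof.
move=> hd hoff hX; rewrite /Defs.C1.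
elim/big_ind: _ => // [x y hx hy | k /existsP [c /andP [hall /forallP hcov]]].
  by rewrite leq_min hx hy.
pose P i := fun r : {set X} * {set Y} => (xs i \in r.1) && (ys i \in r.2).
have hh i : has (P i) c.
  by move: (hcov (xs i)) => /forallP /(_ (ys i)) /implyP; apply; apply: hd.
pose g i := find (P i) c.
have hg i : g i < k by rewrite -(size_tuple c) -has_find.
have ginj : injective g.
  move=> i j hij.
  set r := nth (set0, set0) c (g i).
  have Pi : P i r by apply: nth_find.
  have Pj : P j r by rewrite /r hij; apply: nth_find.
  have rc : r \in (c : seq _) by apply: mem_nth; rewrite size_tuple.
  move: (allP hall r rc) => /forallP hr.
  have fij : f (xs i) (ys j).
    move: Pi Pj => /andP [xi _] /andP [_ yj].
    by move: (hr (xs i)) => /implyP /(_ xi) /forallP /(_ (ys j)) /implyP /(_ yj).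
  have fji : f (xs j) (ys i).
    move: Pi Pj => /andP [_ yi] /andP [xj _].
    by move: (hr (xs j)) => /implyP /(_ xj) /forallP /(_ (ys i)) /implyP /(_ yi).
  case: (ltngtP i j) => h.
  - by rewrite hoff in fij.
  - by rewrite hoff in fji.
  - by apply: val_inj.
have := @uniq_leq_size _ (map g (enum 'I_m)) (iota 0 k).
rewrite size_map size_enum_ord size_iota; apply.
  by rewrite map_inj_uniq ?enum_uniq.
by move=> z /mapP [i _ ->]; rewrite mem_iota add0n hg.
Qed.

Lemma ln_le' (x y : R) : (0 < x)%R -> (x <= y)%R -> (ln x <= ln y)%R.
Proof. move=> hx [h|->]; [left; exact: ln_increasing | right; reflexivity]. Qed.

Lemma real_part (n C : nat) : (3 <= n)%N -> (n.-1 <= C)%N ->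
  (/ (2 * ln 2) * ln (INR n) <= ln (INR C) / ln 2)%R.
Proof.
move=> hn hC.
have L0 : (0 < ln 2)%R by rewrite -ln_1; apply: ln_increasing; lra.
have hx : (2 <= INR n.-1)%R.
  have -> : 2%R = INR 2 by [].
  by apply: le_INR; apply/leP; lia.
have hy : (INR n.-1 <= INR C)%R by apply: le_INR; apply/leP.
have en : INR n = (INR n.-1 + 1)%R.
  by rewrite -S_INR; congr INR; lia.
rewrite en.
have h1 : (ln (INR n.-1 + 1) <= 2 * ln (INR C))%R.
  apply: Rle_trans (_ : ln (INR n.-1 * INR n.-1) <= _)%R.
    apply: ln_le'; nra.
  rewrite ln_mult; try lra.
  have := ln_le' (INR n.-1) (INR C) ltac:(lra) hy; lra.
apply: Rle_trans (_ : / (2 * ln 2) * (2 * ln (INR C)) <= _)%R.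
  apply: Rmult_le_compat_l => //.
  apply: Rlt_le; apply: Rinv_0_lt_compat; lra.
right; field; lra.
Qed.

Theorem mainTheorem6 (M : finType) (mul : M -> M -> M) (one : M)
  (hmon : is_monoid mul one) (hnc : ~ commutative_op mul)
  (le : rel M) (hle : stable_order mul le) :
  exists c : R, (0 < c)%R /\
    exists n0 : nat, forall n : nat, (n0 <= n)%N ->
      (c * ln (INR n) <= N1M mul one le n)%R.
Proof.
case: hle => hrefl [hanti [htrans _]].
have [a [b hab]] : exists a b, ~~ le (mul a b) (mul b a).
  have : ~~ [forall x, forall y, mul x y == mul y x].
    apply/negP => /forallP h; apply: hnc => x y; exact/eqP/(forallP (h x)).
  case/forallPn => x /forallPn [y hxy].
  case hl: (le (mul x y) (mul y x)).
    exists y, x; apply/negP => hl'; move/negP: hxy; apply; apply/eqP.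
    exact: hanti.
  by exists x, y; rewrite hl.
have hneq : mul a b != mul b a by apply/eqP => e; rewrite e hrefl in hab.
pose I := [set x | ~~ le (mul a b) x].
have hI : is_ideal le I.
  apply/forallP => x; apply/forallP => y; apply/implyP => /andP [].
  rewrite !inE => hy hxy; apply/negP => hx; move/negP: hy; apply.
  exact: htrans hx hxy.
have key : forall n, (n.-1 <= C1M mul one le n)%N.
  move=> n.
  apply: leq_trans (leq_bigmax_cond _ hI).
  pose xs := fun i : 'I_n.-1 =>
    [tuple (fun k => if k == (val i).+1 then a else one) (val t) | t < n].
  pose ys := fun i : 'I_n.-1 =>
    [tuple (fun k => if k == val i then b else one) (val t) | t < n].
  have hf : forall i j : 'I_n.-1, word_fun mul one I (xs i) (ys j) =
      (val j <= val i)%N.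
    move=> [i hi] [j hj]; rewrite /word_fun prod_inter // prod_two // add0n /=.
    have -> : (i.+1 < n)%N by move: hi; rewrite -subn1; lia.
    have -> : (j < n)%N by move: hj; rewrite -subn1; lia.
    rewrite /= !inE.
    case: ifP => h.
      by rewrite hrefl /=; symmetry; apply/negbTE; rewrite -ltnNge.
    by rewrite hab /=; symmetry; move/negbT: h; rewrite -leqNgt.
  apply: (@C1_ge _ _ _ n.-1 xs ys).
  - by move=> i; rewrite hf.
  - by move=> i j hij; rewrite hf; apply/negbTE; rewrite -ltnNge.
  - rewrite card_tuple; apply: ltnW; apply: leq_ltn_trans (leq_pred n) _.
    apply: ltn_expl.
    have := subset_leq_card (subset_predT (pred2 (mul a b) (mul b a))).
    by rewrite card2 hneq.
exists (/ (2 * ln 2))%R; split.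
  apply: Rinv_0_lt_compat.
  have : (0 < ln 2)%R by rewrite -ln_1; apply: ln_increasing; lra.
  lra.
exists 3 => n hn; rewrite /N1M; apply: real_part => //; exact: key.
Qed.
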